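(* For the linear classification problem (estimating the margin $\max_{\|x\|\le1}\min_iA_ix$) and for the minimum enclosing ball problem (estimating $\min_x\max_i\|x-A_i\|^2$), there is no Las Vegas algorithm that reads an expected $o(M)$ entries of its input matrix and solves the problem to within a one-sided additive error of at most $1/2$. This holds even if $\|A_i\|=1$ for all rows $A_i$.
   Context: The input is an $n\times d$ real matrix $A$ with $M$ nonzero entries and rows of Euclidean norm at most $1$. A Las Vegas algorithm is a randomized algorithm whose output is always correct (never errs); its cost is the expected number of entries read. *)

(* Defs.v *)
From HB Require Import structures.
From mathcomp Require Import all_boot all_order all_algebra.
From mathcomp Require Import all_classical all_reals all_analysis.
Set Implicit Arguments. Unset Strict Implicit. Unset Printing Implicit Defensive.
Import Order.TTheory GRing.Theory Num.Theory.
Local Open Scope classical_set_scope.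
Local Open Scope ring_scope.

Section Defs.
Variable R : realType.

(* Deterministic query algorithm on an n x d real matrix: a (well-founded)
   decision tree. *)
Inductive qtree (n d : nat) : Type :=
| Leaf of R
| Query of 'I_n & 'I_d & (R -> qtree n d).

Fixpoint run n d (t : qtree n d) (A : 'M[R]_(n, d)) : R :=
  match t with
  | Leaf v => v
  | Query i j k => run (k (A i j)) A
  end.

Fixpoint cost n d (t : qtree n d) (A : 'M[R]_(n, d)) : nat :=
  match t with
  | Leaf _ => 0
  | Query i j k => (cost (k (A i j)) A).+1
  end.

(* M = number of nonzero entries of A *)
Definition nnz n d (A : 'M[R]_(n, d)) : nat :=
  #|[set ij : 'I_n * 'I_d | A ij.1 ij.2 != 0]|.

Definition unit_rows n d (A : 'M[R]_(n, d)) : Prop :=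
  forall i : 'I_n, \sum_(j < d) A i j ^+ 2 = 1.

Definition margin n d (A : 'M[R]_(n, d)) : R :=
  sup ((fun x : 'I_d -> R =>
          inf ((fun i : 'I_n => \sum_(j < d) A i j * x j) @` [set: 'I_n]))
       @` [set x : 'I_d -> R | \sum_(j < d) x j ^+ 2 <= 1]).

Definition meb n d (A : 'M[R]_(n, d)) : R :=
  inf ((fun x : 'I_d -> R =>
          sup ((fun i : 'I_n => \sum_(j < d) (x j - A i j) ^+ 2) @` [set: 'I_n]))
       @` [set: 'I_d -> R]).

(* A randomized algorithm: a random seed w drawn from a probability space
   (Omega, P), and for each seed and each dimension pair (n, d) a
   deterministic query algorithm. *)
Definition expected_cost (d0 : measure_display) (Omega : measurableType d0)
  (P : probability Omega R) (alg : forall n d : nat, Omega -> qtree n d)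
  n d (A : 'M[R]_(n, d)) : \bar R :=
  (\int[P]_w ((cost (alg n d w) A)%:R)%:E)%E.

Definition sublinear_expected_cost (d0 : measure_display) (Omega : measurableType d0)
  (P : probability Omega R) (alg : forall n d : nat, Omega -> qtree n d) : Prop :=
  forall eps : R, 0 < eps -> exists M0 : nat,
    forall n d (A : 'M[R]_(n, d)), unit_rows A -> (M0 <= nnz A)%N ->
      (expected_cost P alg A <= (eps * (nnz A)%:R)%:E)%E.

Definition cost_measurable (d0 : measure_display) (Omega : measurableType d0)
  (alg : forall n d : nat, Omega -> qtree n d) : Prop :=
  forall n d (A : 'M[R]_(n, d)), unit_rows A ->
    measurable_fun [set: Omega] (fun w => ((cost (alg n d w) A)%:R : R)).

End Defs.

(* Main.v *)
Require Import Defs.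
From HB Require Import structures.
From mathcomp Require Import all_boot all_order all_algebra.
From mathcomp Require Import all_classical all_reals all_analysis.
From mathcomp Require Import lra.
Import Order.TTheory GRing.Theory Num.Theory.
Set Implicit Arguments. Unset Strict Implicit.
Local Open Scope classical_set_scope.
Local Open Scope ring_scope.

Section Aux.
Variable R : realType.

Fixpoint visited n d (t : qtree R n d) (A : 'M[R]_(n, d)) : seq ('I_n * 'I_d) :=
  match t with
  | Leaf _ => [::]
  | Query i j k => (i, j) :: visited (k (A i j)) A
  end.

Lemma size_visited n d (t : qtree R n d) A : size (visited t A) = cost t A.
Proof. by elim: t => [v|i j k IH] //=; rewrite IH. Qed.

Lemma run_agree n d (t : qtree R n d) (A B : 'M[R]_(n, d)) :
  (forall p, p \in visited t A -> A p.1 p.2 = B p.1 p.2) -> run t B = run t A.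
Proof.
elim: t => [v|i j k IH] //= H.
have -> : B i j = A i j by rewrite (H (i, j)) // mem_head.
apply: IH => p Hp; apply: H; by rewrite in_cons Hp orbT.
Qed.

Definition A1 n : 'M[R]_(n, 1) := const_mx 1.
Definition Bm n (i0 : 'I_n) : 'M[R]_(n, 1) :=
  \matrix_(i, j) (if i == i0 then -1 else 1).

Lemma A1_unit n : unit_rows (A1 n).
Proof. by move=> i; rewrite big_ord1 /A1 mxE expr1n. Qed.

Lemma Bm_unit n i0 : unit_rows (Bm i0 : 'M[R]_(n, 1)).
Proof. move=> i; rewrite big_ord1 /Bm mxE; case: ifP => _; by rewrite ?sqrrN expr1n. Qed.

Lemma nnz_A1 n : nnz (A1 n) = n.
Proof.
rewrite /nnz.
rewrite (eq_card (B := [set: ('I_n * 'I_1)%type]%SET)); first by rewrite cardsT card_prod !card_ord muln1.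
move=> ij; rewrite finset.in_setT; apply/asboolP => /=; by rewrite /A1 mxE oner_neq0.
Qed.

Lemma cost_big n (t : qtree R n 1) :
  (forall i0, run t (Bm i0) <> run t (A1 n)) -> (n <= cost t (A1 n))%N.
Proof.
move=> Hd; rewrite -size_visited.
case: (pickP (fun i : 'I_n => (i, ord0) \notin visited t (A1 n))) => [i0 Hi0|H].
  exfalso; apply: (Hd i0); apply: run_agree => -[i j] /= Hp.
  rewrite /A1 /Bm !mxE; case: eqP => // Ei; subst i.
  by move: Hp; rewrite (ord1 j) => Hp; rewrite Hp in Hi0.
have E : size [seq (i, (ord0 : 'I_1)) | i <- enum 'I_n] = n.
  by rewrite size_map size_enum_ord.
rewrite -[X in (X <= _)%N]E; apply: uniq_leq_size.
  by rewrite map_inj_uniq ?enum_uniq // => x y [].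
move=> p /mapP [i _ ->]; by move: (H i) => /= /negbFE.
Qed.

Lemma lower_bound (d0 : measure_display) (Omega : measurableType d0)
     (P : probability Omega R) (alg : forall n d : nat, Omega -> qtree R n d) :
  cost_measurable alg ->
  (forall n, (1 < n)%N -> forall w i0,
      run (alg n 1%N w) (Bm i0) <> run (alg n 1%N w) (A1 n)) ->
  ~ sublinear_expected_cost P alg.
Proof.
move=> cm Hd /(_ (2^-1) ltac:(by rewrite invr_gt0)) [M0 HM].
set n := M0.+2.
have := HM n 1%N (A1 n) (@A1_unit n); rewrite nnz_A1 => /(_ (leq_trans (leqnSn M0) (leqnSn _))).
move=> H.
have Hge : ((n%:R)%:E <= expected_cost P alg (A1 n))%E.
  rewrite /expected_cost.
  have := @ge0_le_integral _ _ _ P setT measurableT (fun=> (n%:R)%:E)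
    (fun w => ((cost (alg n 1%N w) (A1 n))%:R)%:E).
  rewrite integral_cst // [X in (_ * X)%E]probability_setT mule1; apply.
  - by move=> *; rewrite lee_fin.
  - exact: measurable_cst.
  - by apply/measurable_realfun.measurable_EFinP; apply: cm; exact: (@A1_unit n).
  - move=> w _; rewrite lee_fin ler_nat; apply: cost_big => i0.
    by apply: Hd.
have := le_trans Hge H; rewrite lee_fin.
have : (0 < n%:R :> R) by rewrite ltr0n.
lra.
Qed.


Lemma sum1 (f : 'I_1 -> R) : \sum_(j < 1) f j = f ord0.
Proof. by rewrite big_ord1. Qed.

Lemma margin_Bm n (i0 i1 : 'I_n) : i1 != i0 -> margin (Bm i0) <= 0.
Proof.
move=> Hne; rewrite /margin; apply: ge_sup.
  eexists; exists (fun=> 0); last reflexivity.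
  by rewrite /= sum1 expr0n.
move=> y [x Hx <-].
set S := (fun i : 'I_n => _) @` _.
have lb : has_lbound S.
  exists (- `|x ord0|) => z [i _ <-]; rewrite sum1 /Bm mxE.
  have h1 := ler_norm (x ord0); have h2 := ler_norm (- x ord0).
  rewrite normrN in h2; case: ifP => _; lra.
have h0 : inf S <= \sum_(j < 1) Bm i0 i0 j * x j by apply: (ge_inf lb); exists i0.
have h1 : inf S <= \sum_(j < 1) Bm i0 i1 j * x j by apply: (ge_inf lb); exists i1.
rewrite !sum1 /Bm !mxE eqxx (negbTE Hne) in h0 h1.
lra.
Qed.

Lemma margin_A1 n : (0 < n)%N -> 1 <= margin (A1 n).
Proof.
move=> n0; set i1 := Ordinal n0.
rewrite /margin.
set E := (fun x : 'I_1 -> R => _) @` _.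
have ub : has_ubound E.
  exists 1 => y [x Hx <-].
  set S := (fun i : 'I_n => _) @` _.
  have lb : has_lbound S.
    by exists (x ord0) => z [i _ <-]; rewrite sum1 /A1 mxE mul1r.
  have h0 : inf S <= \sum_(j < 1) A1 n i1 j * x j by apply: (ge_inf lb); exists i1.
  rewrite sum1 /A1 mxE mul1r in h0.
  move: Hx; rewrite /= sum1 => Hx.
  apply: (le_trans h0); nra.
apply: le_trans (ub_le_sup ub _); last first.
  exists (fun=> 1); last reflexivity.
  by rewrite /= sum1 expr1n.
apply: lb_le_inf; first by exists (\sum_(j < 1) A1 n i1 j * 1); exists i1.
by move=> z [i _ <-]; rewrite sum1 /A1 mxE mulr1.
Qed.

Lemma meb_A1 n : (0 < n)%N -> meb (A1 n) <= 0.
Proof.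
move=> n0; set i1 := Ordinal n0.
rewrite /meb.
set E := (fun x : 'I_1 -> R => _) @` _.
have lb : has_lbound E.
  exists 0 => y [x _ <-].
  set S := (fun i : 'I_n => _) @` _.
  have ub : has_ubound S.
    by exists ((x ord0 - 1) ^+ 2) => z [i _ <-]; rewrite sum1 /A1 mxE.
  apply: le_trans; last first.
    apply: (ub_le_sup ub); exists i1; [done | reflexivity].
  by rewrite sum1 sqr_ge0.
apply: le_trans.
  apply: (ge_inf lb); exists (fun=> 1); [done | reflexivity].
apply: ge_sup; first by eexists; exists i1.
by move=> z [i _ <-]; rewrite sum1 /A1 mxE subrr expr0n.
Qed.

Lemma meb_Bm n (i0 i1 : 'I_n) : i1 != i0 -> 1 <= meb (Bm i0).
Proof.
move=> Hne; rewrite /meb.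
apply: lb_le_inf; first by eexists; exists (fun=> 0).
move=> y [x _ <-].
set S := (fun i : 'I_n => _) @` _.
have ub : has_ubound S.
  exists ((x ord0 - 1) ^+ 2 + (x ord0 + 1) ^+ 2) => z [i _ <-]; rewrite sum1 /Bm mxE.
  have := sqr_ge0 (x ord0 - 1); have := sqr_ge0 (x ord0 + 1).
  case: ifP => _; rewrite ?opprK; lra.
have h0 : \sum_(j < 1) (x j - Bm i0 i0 j) ^+ 2 <= sup S by apply: (ub_le_sup ub); exists i0.
have h1 : \sum_(j < 1) (x j - Bm i0 i1 j) ^+ 2 <= sup S by apply: (ub_le_sup ub); exists i1.
rewrite !sum1 /Bm !mxE eqxx (negbTE Hne) opprK in h0 h1.
nra.
Qed.

End Aux.

Lemma other n (i0 : 'I_n) : (1 < n)%N -> exists i1 : 'I_n, i1 != i0.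
Proof.
move=> n1; have n0 : (0 < n)%N by apply: ltn_trans n1.
case: (eqVneq (Ordinal n0) i0) => [E|]; last by eexists; eassumption.
by exists (Ordinal n1); apply/negP => /eqP E'; rewrite -E' in E; case: E.
Qed.

Theorem mainTheorem19 (R : realType) :
  (forall (d0 : measure_display) (Omega : measurableType d0)
     (P : probability Omega R) (alg : forall n d : nat, Omega -> qtree R n d),
     cost_measurable alg ->
     (forall n d (A : 'M[R]_(n, d)) (w : Omega), unit_rows A -> (0 < n)%N ->
        margin A - 2^-1 <= run (alg n d w) A <= margin A) ->
     ~ sublinear_expected_cost P alg)
  /\
  (forall (d0 : measure_display) (Omega : measurableType d0)
     (P : probability Omega R) (alg : forall n d : nat, Omega -> qtree R n d),
     cost_measurable alg ->
     (forall n d (A : 'M[R]_(n, d)) (w : Omega), unit_rows A -> (0 < n)%N ->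
        meb A <= run (alg n d w) A <= meb A + 2^-1) ->
     ~ sublinear_expected_cost P alg).
Proof.
split=> d0 Omega P alg cm Hc; apply: (lower_bound cm); move=> n n1 w i0 E;
  have n0 : (0 < n)%N := ltn_trans (ltnSn 0) n1;
  have [i1 Hne] := other i0 n1;
  have /andP[a1 a2] := Hc n 1%N (A1 R n) w (@A1_unit R n) n0;
  have /andP[b1 b2] := Hc n 1%N (Bm R i0) w (@Bm_unit R n i0) n0;
  rewrite E in b1 b2.
- have := @margin_A1 R n n0; have := @margin_Bm R n i0 i1 Hne; lra.
- have := @meb_A1 R n n0; have := @meb_Bm R n i0 i1 Hne; lra.
Qed.
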